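(* In the one-way trading setting with price elasticity, let $\pi\ge1$. For every input $\sigma=(g_1,\dots,g_T)$ and every $t\in[T]$, the output of CR-Pursuit($\pi$) satisfies $$\bar v_t\ \le\ c\,\frac{g_t(\bar v_t)}{p(t)},\qquad c=\frac{2}{1+\sqrt{1-1/\pi}}.$$
   Context: Fix $\Delta>0$, $0<m\le M$. Let $\mathcal G_{PE}$ be the set of functions $g(v)=(p-f(v))\,v$ on $[0,\Delta]$, where $p\in[m,M]$ and $f:[0,\Delta]\to[0,\infty)$ is convex and differentiable with $f(0)=0$ (so $g$ is concave, $g(0)=0$, $g'(0)=p$; $g$ need not be increasing). An input is a finite sequence $\sigma=(g_1,\dots,g_T)$ with $g_t(v)=(p(t)-f_t(v))v\in\mathcal G_{PE}$; $\sigma^{[1:t]}=(g_1,\dots,g_t)$ ($\sigma^{[1:0]}$ empty). $\eta_{OPT}(\sigma^{[1:t]})$ is the optimal value of $\max\sum_{s=1}^t g_s(v_s)$ s.t. $\sum_{s=1}^t v_s\le\Delta$, $v_s\ge0$ (and $0$ for the empty sequence). For $\pi\ge1$, CR-Pursuit($\pi$) outputs at time $t$ the smallest $\bar v_t\in[0,\Delta]$ with $g_t(\bar v_t)=\frac1\pi\big[\eta_{OPT}(\sigma^{[1:t]})-\eta_{OPT}(\sigma^{[1:t-1]})\big]$ (such a value exists since the right side lies between $0$ and $\max_{[0,\Delta]}g_t$). *)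

(* Defs.v *)
From Stdlib Require Import Reals Lra.
Open Scope R_scope.

Fixpoint sum1 (t : nat) (F : nat -> R) : R :=
  match t with
  | O => 0
  | S n => sum1 n F + F (S n)
  end.

Definition convex_on (D : R) (f : R -> R) : Prop :=
  forall x y l, 0 <= x <= D -> 0 <= y <= D -> 0 <= l <= 1 ->
    f (l * x + (1 - l) * y) <= l * f x + (1 - l) * f y.

(* differentiability of f on the closed interval [0, D]
   (one-sided at the endpoints: difference quotients taken within [0, D]) *)
Definition differentiable_on (D : R) (f : R -> R) : Prop :=
  forall x, 0 <= x <= D ->
    exists l, limit1_in (fun y => (f y - f x) / (y - x))
                        (fun y => 0 <= y <= D /\ y <> x) l x.

(* g belongs to G_PE: g(v) = (p - f(v)) v with p in [m, M],
   f : [0,D] -> [0,oo) convex, differentiable, f(0) = 0 *)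
Definition PE_params (D m M p : R) (f : R -> R) : Prop :=
  m <= p <= M /\
  (forall v, 0 <= v <= D -> 0 <= f v) /\
  convex_on D f /\ differentiable_on D f /\ f 0 = 0.

Definition gPE (p : R) (f : R -> R) (v : R) : R := (p - f v) * v.

Definition feasible (D : R) (t : nat) (v : nat -> R) : Prop :=
  (forall s, (1 <= s <= t)%nat -> 0 <= v s) /\ sum1 t v <= D.

Definition objective (p : nat -> R) (f : nat -> R -> R) (t : nat) (v : nat -> R) : R :=
  sum1 t (fun s => gPE (p s) (f s) (v s)).

(* eta is the optimal value eta_OPT(sigma^[1:t]) (supremum = maximum of the
   objective over feasible allocations; 0 for the empty prefix t = 0) *)
Definition is_eta_opt (D : R) (p : nat -> R) (f : nat -> R -> R) (t : nat) (eta : R) : Prop :=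
  is_lub (fun y => exists v, feasible D t v /\ y = objective p f t v) eta.

(* vbar is the output of CR-Pursuit(pi) at time t: the smallest value in
   [0, D] with g_t(vbar) = (eta_t - eta_{t-1}) / pi *)
Definition crp_output (D pi : R) (g : R -> R) (eta_t eta_tm1 vbar : R) : Prop :=
  0 <= vbar <= D /\ g vbar = / pi * (eta_t - eta_tm1) /\
  (forall w, 0 <= w <= D -> g w = / pi * (eta_t - eta_tm1) -> vbar <= w).

(* Main.v *)
Require Import Defs.
From Stdlib Require Import Reals Lra Lia Psatz Classical.
Open Scope R_scope.

Lemma cont_within (D : R) f (Hd : differentiable_on D f) x (Hx : 0 <= x <= D) :
  forall eps, eps > 0 -> exists del, del > 0 /\
   forall y, 0 <= y <= D -> Rabs (y - x) < del -> Rabs (f y - f x) < eps.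
Proof.
  intros eps He. destruct (Hd x Hx) as [l Hl].
  destruct (Hl 1 Rlt_0_1) as [alp [Ha H]].
  exists (Rmin alp (eps / (Rabs l + 1))). split.
  { apply Rmin_pos; [lra|]. apply Rdiv_lt_0_compat; [lra|]. pose proof (Rabs_pos l); lra. }
  intros y Hy Hyx.
  destruct (Req_dec y x) as [->|Hne].
  { unfold Rminus; rewrite Rplus_opp_r, Rabs_R0; lra. }
  assert (Hq : Rabs ((f y - f x) / (y - x) - l) < 1).
  { apply (H y). split; [split; auto|]. simpl. unfold R_dist.
    pose proof (Rmin_l alp (eps / (Rabs l + 1))). lra. }
  assert (Hq2 : Rabs ((f y - f x) / (y - x)) < Rabs l + 1).
  { pose proof (Rabs_triang_inv ((f y - f x) / (y - x)) l). lra. }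
  replace (f y - f x) with ((f y - f x) / (y - x) * (y - x)) by (field; lra).
  rewrite Rabs_mult.
  assert (Hl0 : Rabs l + 1 > 0) by (pose proof (Rabs_pos l); lra).
  pose proof (Rmin_r alp (eps / (Rabs l + 1))).
  assert (Rabs (y - x) < eps / (Rabs l + 1)) by lra.
  pose proof (Rabs_pos (y - x)). pose proof (Rabs_pos ((f y - f x) / (y - x))).
  apply Rle_lt_trans with ((Rabs l + 1) * Rabs (y - x)).
  { apply Rmult_le_compat_r; lra. }
  apply Rmult_lt_reg_r with (/ (Rabs l + 1)). apply Rinv_0_lt_compat; lra.
  replace ((Rabs l + 1) * Rabs (y - x) * / (Rabs l + 1)) with (Rabs (y - x)) by (field; lra).
  unfold Rdiv in *. lra.
Qed.

Definition clamp (D x : R) := Rmax 0 (Rmin D x).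

Lemma clamp_in D x : 0 <= D -> 0 <= clamp D x <= D.
Proof. intros. unfold clamp, Rmax, Rmin. repeat destruct Rle_dec; lra. Qed.

Lemma clamp_id D x : 0 <= x <= D -> clamp D x = x.
Proof. intros. unfold clamp, Rmax, Rmin. repeat destruct Rle_dec; lra. Qed.

Lemma clamp_lip D x z : Rabs (clamp D x - clamp D z) <= Rabs (x - z).
Proof. unfold clamp, Rmax, Rmin. repeat destruct Rle_dec; unfold Rabs; repeat destruct Rcase_abs; lra. Qed.

Lemma cont_clamp D : continuity (clamp D).
Proof.
  intros z eps He. exists eps. split; auto. intros x [_ Hx]. simpl in *. unfold R_dist in *.
  pose proof (clamp_lip D x z). lra.
Qed.

Lemma cont_fclamp (D : R) f (HD : 0 <= D) (Hd : differentiable_on D f) :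
  continuity (fun x => f (clamp D x)).
Proof.
  intros z eps He. destruct (cont_within D f Hd (clamp D z) (clamp_in D z HD) eps He) as [del [Hdel H]].
  exists del. split; auto. intros x [_ Hx]. simpl in *. unfold R_dist in *.
  apply H. apply clamp_in; auto. pose proof (clamp_lip D x z). lra.
Qed.

Lemma ivt_g (D P : R) f (HD : 0 < D) (Hd : differentiable_on D f) (y v : R) :
  0 <= v <= D -> 0 < y -> y < gPE P f v -> gPE P f 0 = 0 ->
  exists w, 0 <= w <= v /\ gPE P f w = y.
Proof.
  intros Hv Hy Hlt H0.
  set (h := fun x => (P - f (clamp D x)) * clamp D x - y).
  assert (Hc : continuity h).
  { unfold h. apply continuity_minus; [|apply continuity_const; intros ? ?; auto].
    apply continuity_mult; [|apply cont_clamp].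
    apply continuity_minus; [apply continuity_const; intros ? ?; auto|].
    apply cont_fclamp; [lra|exact Hd]. }
  assert (Hv0 : 0 < v).
  { destruct (Req_dec v 0) as [->|]; [lra|lra]. }
  destruct (IVT h 0 v Hc Hv0) as [z [Hz Hhz]].
  { unfold h. rewrite (clamp_id D 0) by lra. unfold gPE in H0. lra. }
  { unfold h. rewrite (clamp_id D v) by lra. unfold gPE in Hlt. lra. }
  exists z. split; auto. unfold h in Hhz. rewrite (clamp_id D z) in Hhz by lra.
  unfold gPE. lra.
Qed.
Lemma sum1_ext n F G : (forall s, (1 <= s <= n)%nat -> F s = G s) -> sum1 n F = sum1 n G.
Proof.
  induction n; intros H; simpl; auto.
  rewrite IHn by (intros; apply H; lia). rewrite (H (S n)) by lia. auto.
Qed.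

Lemma sum1_nonneg n F : (forall s, (1 <= s <= n)%nat -> 0 <= F s) -> 0 <= sum1 n F.
Proof.
  induction n; intros H; simpl; [lra|].
  pose proof (IHn (fun s Hs => H s ltac:(lia))). pose proof (H (S n) ltac:(lia)). lra.
Qed.

Lemma eta_mono D p f n e1 e2 :
  is_eta_opt D p f n e1 -> is_eta_opt D p f (S n) e2 -> e1 <= e2.
Proof.
  intros H1 H2. apply (proj2 H1). intros y [v [[Hnn Hsum] ->]].
  set (v' := fun s => if Nat.eqb s (S n) then 0 else v s).
  assert (Hext : forall F : R -> R, sum1 n (fun s => F (v' s)) = sum1 n (fun s => F (v s))).
  { intros F. apply sum1_ext. intros s Hs. unfold v'.
    replace (Nat.eqb s (S n)) with false; auto. symmetry; apply Nat.eqb_neq; lia. }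
  apply (proj1 H2). exists v'. split.
  - split.
    + intros s Hs. unfold v'. destruct (Nat.eqb_spec s (S n)); [lra|apply Hnn; lia].
    + simpl. assert (E : sum1 n v' = sum1 n v).
      { apply sum1_ext. intros s Hs. unfold v'.
        replace (Nat.eqb s (S n)) with false; auto. symmetry; apply Nat.eqb_neq; lia. }
      rewrite E. unfold v'. rewrite Nat.eqb_refl. lra.
    - unfold objective. simpl.
      assert (E : sum1 n (fun s => gPE (p s) (f s) (v' s)) = sum1 n (fun s => gPE (p s) (f s) (v s))).
      { apply sum1_ext. intros s Hs. unfold v'.
        replace (Nat.eqb s (S n)) with false; auto. symmetry; apply Nat.eqb_neq; lia. }
      rewrite E. unfold v'. rewrite Nat.eqb_refl. unfold gPE. ring.
Qed.

Lemma lub_approx (E : R -> Prop) l eps : is_lub E l -> eps > 0 -> exists x, E x /\ x > l - eps.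
Proof.
  intros [Hub Hl] He. apply NNPP. intros Hn.
  assert (is_upper_bound E (l - eps)).
  { intros x Hx. apply Rnot_lt_le. intros Hc. apply Hn. exists x; split; auto. }
  pose proof (Hl _ H). lra.
Qed.

Lemma eta_approx D p f n e1 e2 eps :
  is_eta_opt D p f n e1 -> is_eta_opt D p f (S n) e2 -> eps > 0 ->
  exists w, 0 <= w <= D /\ gPE (p (S n)) (f (S n)) w > e2 - e1 - eps.
Proof.
  intros H1 H2 He. destruct (lub_approx _ _ eps H2 He) as [x [[v [[Hnn Hs] ->]] Hx]].
  exists (v (S n)). simpl in Hs.
  assert (Hvn : 0 <= v (S n)) by (apply Hnn; lia).
  assert (Hsn : 0 <= sum1 n v) by (apply sum1_nonneg; intros; apply Hnn; lia).
  split; [lra|].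
  assert (Hle : objective p f n v <= e1).
  { apply (proj1 H1). exists v. split; auto. split; [intros; apply Hnn; lia|lra]. }
  unfold objective in *. simpl in Hx. lra.
Qed.

Theorem lemma14 (D m M pi : R) (T : nat) (p : nat -> R) (f : nat -> R -> R)
  (hD : 0 < D) (hm : 0 < m) (hmM : m <= M) (hpi : 1 <= pi)
  (hinput : forall s, (1 <= s <= T)%nat -> PE_params D m M (p s) (f s))
  (t : nat) (ht : (1 <= t <= T)%nat)
  (eta_t eta_tm1 vbar : R)
  (heta_t : is_eta_opt D p f t eta_t)
  (heta_tm1 : is_eta_opt D p f (t - 1) eta_tm1)
  (hout : crp_output D pi (gPE (p t) (f t)) eta_t eta_tm1 vbar) :
  vbar <= (2 / (1 + sqrt (1 - 1 / pi))) * (gPE (p t) (f t) vbar / p t).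
Proof.
  destruct (hinput t ht) as [[hmp hpM] [hfnn [hconv [hdiff hf0]]]].
  destruct t as [|n]; [lia|]. replace (S n - 1)%nat with n in heta_tm1 by lia.
  set (P := p (S n)) in *. set (Fn := f (S n)) in *.
  destruct hout as [[hv0 hvD] [hgv hmin]].
  set (y := / pi * (eta_t - eta_tm1)) in *.
  assert (HP : 0 < P) by lra.
  assert (Hpi0 : 0 < pi) by lra.
  assert (Hmono := eta_mono D p f n _ _ heta_tm1 heta_t).
  assert (Hy0 : 0 <= y).
  { unfold y. apply Rmult_le_pos; [left; apply Rinv_0_lt_compat; lra | lra]. }
  assert (Happ : forall eps, eps > 0 -> exists w, 0 <= w <= D /\ gPE P Fn w > pi * y - eps).
  { intros eps He. destruct (eta_approx D p f n _ _ eps heta_tm1 heta_t He) as [w [Hw Hg]].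
    exists w. split; auto. unfold y. replace (pi * (/ pi * (eta_t - eta_tm1))) with (eta_t - eta_tm1)
      by (field; lra). exact Hg. }
  assert (Hg0 : gPE P Fn 0 = 0) by (unfold gPE; ring).
  set (s := sqrt (1 - 1 / pi)).
  assert (Hs0 : 0 <= s) by apply sqrt_pos.
  assert (Hinv : / pi <= 1) by (rewrite <- Rinv_1; apply Rinv_le_contravar; lra).
  assert (Hinvp : 0 < / pi) by (apply Rinv_0_lt_compat; lra).
  assert (Hpiinv : pi * / pi = 1) by (field; lra).
  assert (Hs2 : s * s = 1 - / pi).
  { unfold s. unfold Rdiv. rewrite Rmult_1_l. apply sqrt_sqrt. lra. }
  assert (Hs1 : s <= 1) by nra.
  destruct (Req_dec y 0) as [Hy|Hy].
  {
    assert (vbar <= 0) by (apply hmin; [lra|]; rewrite Hg0; auto).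
    assert (vbar = 0) by lra. subst vbar. rewrite Hg0. unfold Rdiv. rewrite Rmult_0_l, Rmult_0_r. lra. }
  assert (Hyp : 0 < y) by lra.
  assert (Hvp : 0 < vbar).
  { destruct (Req_dec vbar 0) as [E|E]; [|lra]. rewrite E, Hg0 in hgv. lra. }
  set (F := Fn vbar).
  assert (HA : forall v, 0 <= v <= vbar -> gPE P Fn v <= y).
  { intros v Hv. apply Rnot_lt_le. intros Hc.
    destruct (ivt_g D P Fn hD hdiff y v ltac:(lra) Hyp Hc Hg0) as [w [Hw Hgw]].
    assert (vbar <= w) by (apply hmin; [lra|auto]).
    assert (w = v) by lra. subst w. lra. }
  assert (Hcl : forall v, 0 <= v <= vbar -> vbar * Fn v <= v * F).
  { intros v Hv. pose proof (hconv vbar 0 (v / vbar) ltac:(lra) ltac:(lra)) as Hc.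
    assert (Hl : 0 <= v / vbar <= 1).
    { split. unfold Rdiv; apply Rmult_le_pos; [lra| left; apply Rinv_0_lt_compat; lra].
      apply Rmult_le_reg_r with vbar; auto. unfold Rdiv. rewrite Rmult_assoc, Rinv_l by lra. lra. }
    specialize (Hc Hl). rewrite hf0 in Hc.
    replace (v / vbar * vbar + (1 - v / vbar) * 0) with v in Hc by (field; lra).
    fold F in Hc.
    replace (v * F) with (vbar * (v / vbar * F + (1 - v / vbar) * 0)) by (field; lra).
    apply Rmult_le_compat_l; lra. }
  assert (Hcu : forall w, vbar <= w <= D -> w * F <= vbar * Fn w).
  { intros w Hw. pose proof (hconv w 0 (vbar / w) ltac:(lra) ltac:(lra)) as Hc.
    assert (Hl : 0 <= vbar / w <= 1).
    { split. unfold Rdiv; apply Rmult_le_pos; [lra| left; apply Rinv_0_lt_compat; lra].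
      apply Rmult_le_reg_r with w; [lra|]. unfold Rdiv. rewrite Rmult_assoc, Rinv_l by lra. lra. }
    specialize (Hc Hl). rewrite hf0 in Hc.
    replace (vbar / w * w + (1 - vbar / w) * 0) with vbar in Hc by (field; lra).
    fold F in Hc.
    replace (vbar * Fn w) with (w * (vbar / w * Fn w + (1 - vbar / w) * 0)) by (field; lra).
    apply Rmult_le_compat_l; lra. }
  assert (HgE : y = (P - F) * vbar) by (rewrite <- hgv; reflexivity).
  assert (HR : 2 * F <= P).
  { apply Rnot_lt_le. intros Hc.
    assert (HF : 0 < F) by lra.
    set (v0 := P * vbar / (2 * F)).
    assert (Hv0a : 0 < v0) by (unfold v0; apply Rdiv_lt_0_compat; nra).
    assert (Hv0e : v0 * (2 * F) = P * vbar) by (unfold v0; field; lra).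
    assert (Hv0b : v0 < vbar) by nra.
    pose proof (HA v0 ltac:(lra)) as H1. pose proof (Hcl v0 ltac:(lra)) as H2.
    unfold gPE in H1. fold F in H2.
    assert (H3 : vbar * ((P - Fn v0) * v0) <= vbar * y) by (apply Rmult_le_compat_l; lra).
    assert (H4 : v0 * (P * vbar - v0 * F) <= vbar * y) by nra.
    rewrite HgE in H4.
    assert (H5 : 2 * F * (v0 * (P * vbar - v0 * F)) <= 2 * F * (vbar * ((P - F) * vbar))) by (apply Rmult_le_compat_l; lra).
    assert (E1 : 2 * F * (v0 * (P * vbar - v0 * F)) = P * vbar * (P * vbar) / 2).
    { replace (2 * F * (v0 * (P * vbar - v0 * F))) with ((v0 * (2 * F)) * (P * vbar - v0 * F)) by ring.
      rewrite Hv0e. replace (v0 * F) with (P * vbar / 2) by (field_simplify; lra). field. }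
    rewrite E1 in H5.
    assert (H6 : vbar * vbar * ((P - 2 * F) * (P - 2 * F)) <= 0) by nra.
    assert (H7 : 0 < vbar * vbar * ((P - 2 * F) * (P - 2 * F))).
    { apply Rmult_lt_0_compat; [nra|]. nra. }
    lra. }
  assert (Hgoal : F <= P * (1 - s) / 2).
  { destruct (Req_dec pi 1) as [E|E].
    { assert (s = 0) by (unfold s; rewrite E; replace (1 - 1/1) with 0 by field; apply sqrt_0).
      rewrite H. lra. }
    assert (Hpi1 : 1 < pi) by lra.
    assert (Hsp : 0 < s).
    { unfold s. apply sqrt_lt_R0. unfold Rdiv. rewrite Rmult_1_l.
      assert (/ pi < 1) by (rewrite <- Rinv_1; apply Rinv_lt_contravar; lra). lra. }
    apply Rnot_lt_le. intros Hc.
    assert (HF : 0 < F) by nra.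
    set (B := P * P * vbar / (4 * F)).
    assert (HB : B < pi * y).
    { unfold B. rewrite HgE.
      apply Rmult_lt_reg_r with (4 * F); [lra|].
      replace (P * P * vbar / (4 * F) * (4 * F)) with (P * P * vbar) by (field; lra).
      assert (Hq : (P - 2 * F) * (P - 2 * F) < s * s * (P * P)).
      { assert (0 <= P - 2 * F) by lra. assert (P - 2 * F < s * P) by lra. nra. }
      rewrite Hs2 in Hq.
      assert (P * P < pi * (4 * F * (P - F))).
      { assert (Hq2 : pi * ((P - 2 * F) * (P - 2 * F)) < pi * ((1 - / pi) * (P * P))) by (apply Rmult_lt_compat_l; lra).
        replace (pi * ((1 - / pi) * (P * P))) with (pi * (P * P) - P * P) in Hq2 by (field; lra).
        nra. }
      nra. }
    assert (Hyl : y < pi * y) by nra.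
    set (K := Rmax y B).
    assert (HK : K < pi * y) by (unfold K; apply Rmax_lub_lt; lra).
    destruct (Happ (pi * y - K) ltac:(lra)) as [w [Hw Hgw]].
    replace (pi * y - (pi * y - K)) with K in Hgw by ring.
    destruct (Rle_lt_dec w vbar) as [Hwv|Hwv].
    { pose proof (HA w ltac:(lra)). pose proof (Rmax_l y B). fold K in H0. lra. }
    pose proof (Hcu w ltac:(lra)) as H1. unfold gPE in Hgw.
    assert (H2 : vbar * ((P - Fn w) * w) <= w * (P * vbar - w * F)).
    { assert (0 <= w * (vbar * Fn w - w * F)) by (apply Rmult_le_pos; lra). nra. }
    assert (H3 : 4 * F * (w * (P * vbar - w * F)) <= P * vbar * (P * vbar)).
    { pose proof (Rle_0_sqr (P * vbar - 2 * F * w)). unfold Rsqr in H. nra. }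
    assert (H4 : (P - Fn w) * w <= B).
    { unfold B. apply Rmult_le_reg_r with (4 * F * vbar); [nra|].
      replace (P * P * vbar / (4 * F) * (4 * F * vbar)) with (P * vbar * (P * vbar)) by (field; lra).
      nra. }
    pose proof (Rmax_r y B). fold K in H. lra. }
  replace (gPE P Fn vbar) with ((P - F) * vbar) by reflexivity.
  assert (H1s : 0 < 1 + s) by lra.
  apply Rminus_le.
  replace (vbar - 2 / (1 + s) * ((P - F) * vbar / P)) with (- (vbar * (2 * (P - F) - (1 + s) * P) / ((1 + s) * P))) by (field; lra).
  assert (0 <= vbar * (2 * (P - F) - (1 + s) * P) / ((1 + s) * P)).
  { unfold Rdiv; apply Rmult_le_pos; [apply Rmult_le_pos; lra | left; apply Rinv_0_lt_compat; nra]. }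
  lra.
Qed.
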